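(* In the 2-sided error regime, there exists an algorithm that finds a realized spanning tree with high probability, using $O(m\log m)$ queries in a moldgraph of $m$ edges.
   Context: Problem (graph connectivity with noisy queries): a graph $G=(V,E)$, the moldgraph, with $m$ edges is given. An adversary selects an arbitrary connected spanning subgraph of $G$ to be realized. The algorithm may query an oracle on any edge $e$ (``Is $e$ realized?'') and receives ``Yes''/``No''; each query costs $1$, and answers to distinct queries (including repeated queries of the same edge) are independent. Goal: output a spanning tree of $G$ all of whose edges are realized. In the 2-sided error regime, each answer is wrong with a constant probability $p<1/2$. ``With high probability'' means with probability tending to $1$ as $m\to\infty$. *)

(* Defs.v *)
From HB Require Import structures.
From mathcomp Require Import all_boot all_order all_algebra.
From mathcomp Require Import boolp reals exp.
Set Implicit Arguments. Unset Strict Implicit. Unset Printing Implicit Defensive.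
Import Order.TTheory GRing.Theory Num.Theory.

(* A graph on vertex set 'I_n is given by its edge set: a set of 2-subsets. *)
Definition simple_graph n (E : {set {set 'I_n}}) : Prop :=
  forall e, e \in E -> #|e| = 2%N.

Definition adjS n (S : {set {set 'I_n}}) : rel 'I_n :=
  fun x y => [set x; y] \in S.

Definition connected_sp n (S : {set {set 'I_n}}) : Prop :=
  forall u v : 'I_n, connect (adjS S) u v.

Definition has_cycle n (S : {set {set 'I_n}}) : Prop :=
  exists s : seq 'I_n, [/\ (3 <= size s)%N, uniq s & cycle (adjS S) s].

Definition spanning_tree n (E T : {set {set 'I_n}}) : Prop :=
  [/\ T \subset E, connected_sp T & ~ has_cycle T].

(* Adaptive query algorithms: given the history of answers received so far,
   either query an edge or output an edge set. *)
Inductive action n := Query of {set 'I_n} | Output of {set {set 'I_n}}.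

(* An algorithm knows the moldgraph (n, E) and adapts to answers. *)
Definition algorithm := forall n : nat, {set {set 'I_n}} -> seq bool -> action n.

(* Execution with realized edge set Rz and error pattern flips:
   the k-th query (0-based) is answered wrongly iff flips k.
   fuel bounds the number of queries; returns the output and the
   number of queries used, or None if fuel was exhausted. *)
Fixpoint exec n (alg : seq bool -> action n) (Rz : {set {set 'I_n}})
    (flips : nat -> bool) (fuel : nat) (h : seq bool)
    : option ({set {set 'I_n}} * nat) :=
  match alg h with
  | Output T => Some (T, size h)
  | Query e =>
      match fuel with
      | 0 => None
      | S f => exec alg Rz flips f (rcons h ((e \in Rz) (+) flips (size h)))
      end
  end.

Definition ext_flips K (f : {ffun 'I_K -> bool}) : nat -> bool :=
  fun k => match @insub nat (fun k => k < K)%N 'I_K k with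
           | Some i => f i | None => false end.

Local Open Scope ring_scope.

Definition weight (R : realType) (p : R) K (f : {ffun 'I_K -> bool}) : R :=
  \prod_(i : 'I_K) (if f i then p else 1 - p).

Definition success n (E Rz : {set {set 'I_n}})
    (o : option ({set {set 'I_n}} * nat)) : Prop :=
  match o with
  | Some (T, _) => spanning_tree E T /\ T \subset Rz
  | None => False
  end.

Definition successb n (E Rz : {set {set 'I_n}})
    (o : option ({set {set 'I_n}} * nat)) : bool :=
  `[< success E Rz o >].

(* Main.v *)
Require Import Defs.
From HB Require Import structures.
From mathcomp Require Import all_boot all_order all_algebra.
From mathcomp Require Import boolp reals exp.
From mathcomp Require sequences.
From mathcomp Require Import zify.
From mathcomp.algebra_tactics Require Import ring lra.
Import Order.TTheory GRing.Theory Num.Theory.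
Set Implicit Arguments. Unset Strict Implicit. Unset Printing Implicit Defensive.
Local Notation expR := sequences.expR.

Section Graph.
Variable n : nat.
Implicit Types S T : {set {set 'I_n}}.

Lemma adjS_sym T : symmetric (adjS T).
Proof. by move=> x y; rewrite /adjS setUC. Qed.

Lemma in_set2_eq (u v x y : 'I_n) : [set u; v] = [set x; y] ->
  (u == x) || (u == y).
Proof.
move=> e; have : u \in [set x; y] by rewrite -e !inE eqxx.
by rewrite !inE.
Qed.

Lemma cycle_remove T : has_cycle T ->
  exists2 e, e \in T & subrel (adjS T) (connect (adjS (T :\ e))).
Proof.
case=> s [hs us cs].
case: s hs us cs => [|x [|y t]] //= hs.
rewrite !inE negb_or => /and3P [/andP [xy xt] yt ut] /andP [axy].
rewrite rcons_path => /andP [pt la].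
exists [set x; y] => //.
have yx : connect (adjS (T :\ [set x; y])) y x.
  have : path (adjS (T :\ [set x; y])) y (rcons t x).
    rewrite rcons_path; apply/andP; split.
      apply: (@sub_in_path _ (predC1 x) (adjS T)); last first.
      - exact: pt.
      - apply/allP => w /=; rewrite inE => /orP [/eqP -> | wt]; first by rewrite eq_sym.
        by apply/eqP => wx; rewrite -wx wt in xt.
      move=> u v; rewrite !inE /adjS => ux vx huv.
      rewrite !inE huv andbT; apply/negP => /eqP /esym e.
      by have := in_set2_eq e; rewrite !(eq_sym x) (negbTE ux) (negbTE vx).
    rewrite /adjS in la; rewrite /adjS !inE la andbT; apply/negP => /eqP e.
    have := in_set2_eq e.
    case: t hs xt yt {ut pt la e} => [|w t] //= _.
    rewrite !inE !negb_or => /andP [xw xt] /andP [yw yt].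
    have : last w t \in w :: t by apply: mem_last.
    rewrite inE => /orP [/eqP -> | lt].
      by rewrite !(eq_sym w) (negbTE xw) (negbTE yw).
    by case/orP => /eqP el; [move: xt | move: yt]; rewrite -el lt.
  move=> p; apply: (path_connect p); by rewrite inE mem_rcons inE eqxx orbT.
have xy' : connect (adjS (T :\ [set x; y])) x y by rewrite (sym_connect_sym (@adjS_sym _)).
move=> u v huv.
case: (boolP ([set u; v] == [set x; y])) => [/eqP e | ne].
  have := in_set2_eq e.
  have e' : [set v; u] = [set x; y] by rewrite setUC.
  have := in_set2_eq e'.
  by case/orP => /eqP -> /orP [] /eqP ->.
by apply: connect1; rewrite /adjS !inE ne.
Qed.

Lemma st_exists S : connected_sp S -> exists T, spanning_tree S T.
Proof.
move=> cS.
suff H : forall k T, (#|T| <= k)%N -> T \subset S -> connected_sp T ->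
  exists T', spanning_tree S T' by exact: (H _ S (leqnn _) (subxx _) cS).
elim=> [|k IH] T hk sT cT.
  exists T; split => //; case=> s [hs _ cs].
  move: hk; rewrite leqn0 => /eqP /cards0_eq T0.
  case: s hs cs => [|x [|y t]] //= _ /andP [].
  by rewrite /adjS T0 inE.
case: (pselect (has_cycle T)) => hc; last by exists T.
case: (cycle_remove hc) => e eT sub.
apply: (IH (T :\ e)).
- by move: hk; rewrite (cardsD1 e T) eT add1n ltnS.
- exact: subset_trans (subsetDl _ _) sT.
- by move=> u v; apply: connect_sub sub _ _ (cT u v).
Qed.

Definition pick_tree S : {set {set 'I_n}} :=
  odflt set0 [pick T | `[< spanning_tree S T >] ].

Lemma pick_treeP S : connected_sp S -> spanning_tree S (pick_tree S).
Proof.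
move=> /st_exists [T0 hT0]; rewrite /pick_tree.
case: pickP => [T /asboolP //|] /(_ T0).
by move/asboolP : hT0 => ->.
Qed.
End Graph.

Section Alg.
Variables (R : realType) (p : R).
Local Open Scope ring_scope.
Definition qq : R := p / 2 + 1 / 4.
Definition lam : R := (1 - p) / qq.
Definition gg : R := (p * lam + (1 - p)) ^+ 2 / lam.
Definition cc : R := 2 / (- ln gg).
Definition rr (m : nat) : nat := (Num.truncn (cc * ln m%:R)).+1.
Local Close Scope ring_scope.

Definition BB n (E : {set {set 'I_n}}) := 2 * rr #|E|.
Definition KK n (E : {set {set 'I_n}}) := #|E| * BB E.
Definition cnt (B : nat) (h : seq bool) (a : nat) : nat :=
  \sum_(i < B) nth false h (a * B + i).
Definition Sset n (E : {set {set 'I_n}}) (h : seq bool) :=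
  [set e in E | rr #|E| < cnt (BB E) h (index e (enum E))].

Definition alg : algorithm := fun n E h =>
  if size h < KK E then Query (nth set0 (enum E) (size h %/ BB E))
  else Output (pick_tree (Sset E h)).

Section Run.
Variables (n : nat) (E Rz : {set {set 'I_n}}) (flips : nat -> bool).
Definition ans j := (nth set0 (enum E) (j %/ BB E) \in Rz) (+) flips j.

Lemma exec_run_gen d i : i + d = KK E ->
  exec (alg E) Rz flips d (mkseq ans i) = Some (pick_tree (Sset E (mkseq ans (KK E))), KK E).
Proof.
elim: d i => [|d IH] i hi; rewrite [exec _ _ _ _ _]/=.
  rewrite addn0 in hi; subst i.
  rewrite {1}/alg; cbv beta. have -> : size (mkseq ans (KK E)) = KK E by apply: size_mkseq. by rewrite ltnn.
rewrite {1}/alg; cbv beta.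
have -> : size (mkseq ans i) = i by apply: size_mkseq.
rewrite (_ : i < KK E); last by rewrite -hi -addSnnS leq_addr.
have -> : rcons (mkseq ans i) ((nth set0 (enum E) (i %/ BB E) \in Rz) (+) flips i) = mkseq ans i.+1.
  by rewrite mkseqS.
by apply: IH; rewrite addSnnS.
Qed.

Lemma exec_run : exec (alg E) Rz flips (KK E) [::] =
  Some (pick_tree (Sset E (mkseq ans (KK E))), KK E).
Proof. exact: (@exec_run_gen (KK E) 0 (add0n _)). Qed.

Lemma sum_negb B (f : nat -> bool) :
  \sum_(i < B) (~~ f i : nat) = B - \sum_(i < B) (f i : nat).
Proof.
have : \sum_(i < B) (~~ f i : nat) + \sum_(i < B) (f i : nat) = B.
  rewrite -big_split /=.
  rewrite (eq_bigr (fun _ => 1)); last by move=> i _; case: (f i).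
  by rewrite sum1_card card_ord.
set X := \sum_(i < B) _; set Y := \sum_(i < B) _; lia.
Qed.

Lemma rr_gt0 m : 0 < rr m. Proof. by []. Qed.

Lemma good_Sset : Rz \subset E ->
  (forall a, a < #|E| -> \sum_(i < BB E) (flips (a * BB E + i) : nat) < rr #|E|) ->
  Sset E (mkseq ans (KK E)) = Rz.
Proof.
move=> hsub hg; apply/setP => e; rewrite /Sset inE.
case: (boolP (e \in E)) => eE /=; last first.
  by apply/esym/negP => /(subsetP hsub); rewrite (negbTE eE).
have aE : index e (enum E) < #|E| by rewrite cardE index_mem mem_enum.
have B0 : 0 < BB E by rewrite /BB muln_gt0.
rewrite /cnt.
rewrite (eq_bigr (fun i : 'I_(BB E) => ((e \in Rz) (+) flips (index e (enum E) * BB E + i) : nat))); last first.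
  move=> i _; rewrite nth_mkseq; last first.
    rewrite /KK; apply: (@leq_trans ((index e (enum E)).+1 * BB E)).
      by rewrite mulSn [X in _ < X]addnC ltn_add2l.
    by rewrite leq_mul2r aE orbT.
  rewrite /ans divnMDl // divn_small // addn0 nth_index //; by rewrite mem_enum.
have := hg _ aE; set X := \sum_(i < BB E) _ => hX.
case: (e \in Rz) => /=.
  rewrite (sum_negb _ (fun i => flips (index e (enum E) * BB E + i))) -/X.
  apply/idP; rewrite /BB. move: hX; clearbody X; move: (rr #|E|) => r; lia.
by apply/negbTE; rewrite -leqNgt -/X ltnW.
Qed.

Lemma good_success : Rz \subset E -> connected_sp Rz ->
  (forall a, a < #|E| -> \sum_(i < BB E) (flips (a * BB E + i) : nat) < rr #|E|) ->
  success E Rz (exec (alg E) Rz flips (KK E) [::]).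
Proof.
move=> hsub hc hg; rewrite exec_run /= (good_Sset hsub hg).
have [sT cT nT] := pick_treeP hc.
split => //; split => //; exact: subset_trans sT hsub.
Qed.
End Run.
End Alg.

Lemma big_block (T : Type) (idx : T) (op : Monoid.law idx) m B a (F : nat -> T) :
  0 < B -> a < m ->
  \big[op/idx]_(0 <= j < m * B | j %/ B == a) F j = \big[op/idx]_(i < B) F (a * B + i).
Proof.
move=> B0 am.
rewrite (@big_cat_nat _ _ _ (a * B)) //=; last by rewrite leq_mul2r ltnW ?orbT.
rewrite (@big_cat_nat _ _ _ (a * B + B) (a * B)) //=; last first.
  by rewrite -mulSnr leq_mul2r am orbT.
  by rewrite leq_addr.
rewrite big_nat_cond big1; last first.
  move=> j /andP [/andP [_ hj] /eqP hja]; exfalso.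
  by move: hj; rewrite -ltn_divLR // hja ltnn.
rewrite Monoid.mul1m.
rewrite [X in op _ X]big_nat_cond [X in op _ X]big1; last first.
  move=> j /andP [/andP [hj _] /eqP hja]; exfalso.
  by move: hj; rewrite -mulSnr -leq_divRL // hja ltnn.
rewrite Monoid.mulm1.
rewrite -{1}(add0n (a * B)) big_addn addKn big_mkord.
apply: eq_big => [i|i _]; last by rewrite addnC.
by rewrite addnC divnMDl // divn_small // addn0 eqxx.
Qed.

Lemma ext_flipsE K (f : {ffun 'I_K -> bool}) (j : 'I_K) : ext_flips f j = f j.
Proof.
rewrite /ext_flips; case: insubP => [i _ /val_inj -> // |]; by rewrite ltn_ord.
Qed.

Section Prob.
Variables (R : realType) (p : R).
Local Open Scope ring_scope.

Lemma weight_sum K : \sum_(f : {ffun 'I_K -> bool}) weight p f = 1.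
Proof.
rewrite /weight -(bigA_distr_bigA (fun (i : 'I_K) (b : bool) => if b then p else 1 - p)) /=.
by apply: big1 => i _; rewrite big_bool /= addrC subrK.
Qed.

Lemma chernoff m B a (lam : R) : (0 < B)%N -> (a < m)%N ->
  \sum_(f : {ffun 'I_(m * B) -> bool})
     weight p f * lam ^+ (\sum_(i < B) (ext_flips f (a * B + i)%N : nat))
  = (p * lam + (1 - p)) ^+ B.
Proof.
move=> B0 am.
have E1 : forall f : {ffun 'I_(m * B) -> bool},
   lam ^+ (\sum_(i < B) (ext_flips f (a * B + i)%N : nat)) =
   \prod_(j : 'I_(m * B)) (if ((j %/ B)%N == a) && f j then lam else 1).
  move=> f; rewrite expr_sum.
  rewrite -(big_block _ (fun j => lam ^+ (ext_flips f j : nat)) B0 am) big_mkord big_mkcond.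
  apply: eq_bigr => j _; rewrite ext_flipsE.
  by case: ((j %/ B)%N == a); case: (f j).
rewrite (eq_bigr (fun f : {ffun 'I_(m * B) -> bool} => \prod_(j : 'I_(m * B))
   ((if f j then p else 1 - p) * (if ((j %/ B)%N == a) && f j then lam else 1)))); last first.
  by move=> f _; rewrite E1 /weight big_split.
rewrite -(bigA_distr_bigA (fun (j : 'I_(m * B)) (b : bool) =>
   (if b then p else 1 - p) * (if ((j %/ B)%N == a) && b then lam else 1))) /=.
rewrite (eq_bigr (fun j : 'I_(m * B) => if (j %/ B)%N == a then p * lam + (1 - p) else 1)); last first.
  by move=> j _; rewrite big_bool /=; case: ((j %/ B)%N == a) => /=; rewrite !mulr1 // addrC subrK.
rewrite -big_mkcond -(big_mkord (fun j => (j %/ B)%N == a) (fun _ => p * lam + (1 - p))).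
by rewrite (big_block _ _ B0 am) prodr_const card_ord.
Qed.
End Prob.
Local Open Scope ring_scope.

Section Real.
Variables (R : realType) (p : R).
Hypotheses (p0 : 0 <= p) (p1 : p < 1 / 2).

Lemma qq_gt0 : 0 < qq p. Proof. have h0 := p0; rewrite /qq; lra. Qed.
Lemma lam_ge1 : 1 <= lam p.
Proof. have h1 := p1; rewrite /lam ler_pdivlMr ?qq_gt0 // /qq; lra. Qed.
Lemma lam_gt0 : 0 < lam p. Proof. by apply: lt_le_trans lam_ge1. Qed.

Lemma gg_eq : gg p = (1 - p) * (p + qq p) ^+ 2 / qq p.
Proof.
rewrite /gg /lam; have := qq_gt0 => hq.
have h1 := p1; have hp : 1 - p != 0 by apply/eqP; lra.
field; apply/andP; split => //; exact: lt0r_neq0.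
Qed.

Lemma gg_gt0 : 0 < gg p.
Proof.
have h0 := p0; have h1 := p1.
rewrite gg_eq; apply: divr_gt0; last exact: qq_gt0.
apply: mulr_gt0; first lra.
rewrite exprn_gt0 // /qq; lra.
Qed.

Lemma gg_lt1 : gg p < 1.
Proof.
have h0 := p0; have h1 := p1.
rewrite gg_eq ltr_pdivrMr ?qq_gt0 // mul1r /qq.
have k1 : 0 < (1/2 - p) ^+ 2 by rewrite exprn_gt0 //; lra.
have k2 : 0 < 15/8 - 9/4 * (1/2 - p) by lra.
have h3 := mulr_gt0 k1 k2.
have e : (1 - p) * (p + (p / 2 + 1 / 4)) ^+ 2 - (p / 2 + 1 / 4) =
  - ((1/2 - p) ^+ 2 * (15/8 - 9/4 * (1/2 - p))) by field.
lra.
Qed.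

Lemma gg_pow_bound (m : nat) : (2 <= m)%N -> gg p ^+ rr p m <= (m%:R ^+ 2)^-1.
Proof.
move=> hm.
have mgt1 : 1 < m%:R :> R by rewrite ltr1n.
have m0 : 0 < m%:R :> R by apply: lt_trans mgt1.
have L0 : 0 < ln (m%:R : R) := ln_gt0 mgt1.
have g0 := gg_gt0; have g1 := gg_lt1.
have lg0 : ln (gg p) < 0 by apply: ln_lt0; rewrite g0 g1.
have hr : cc p * ln (m%:R) < (rr p m)%:R by rewrite /rr; apply: truncnS_gt.
have e1 : gg p ^+ rr p m = expR ((rr p m)%:R * ln (gg p)).
  by rewrite mulr_natl -lnXn // lnK // posrE exprn_gt0.
have e2 : (m%:R ^+ 2)^-1 = expR (- (2%:R * ln (m%:R))) :> R.
  by rewrite expRN expRM_natl lnK // posrE.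
rewrite e1 e2 ler_expR.
have e3 : cc p * ln (m%:R) * ln (gg p) = - (2%:R * ln (m%:R)).
  by rewrite /cc; field; exact: ltr0_neq0.
rewrite -e3; move: hr lg0; set r := (rr p m)%:R; set a := cc p * _; set b := ln (gg p).
move=> hr lg0; nra.
Qed.

Lemma K_bound (m : nat) : (2 <= m)%N ->
  (m * (2 * rr p m))%:R <= (2 * (cc p + 1 / ln 2)) * (m%:R * ln m%:R) :> R.
Proof.
move=> hm.
have mgt1 : 1 < m%:R :> R by rewrite ltr1n.
have m0 : 0 < m%:R :> R by apply: lt_trans mgt1.
have L0 : 0 < ln (m%:R : R) := ln_gt0 mgt1.
have l20 : 0 < ln 2 :> R by apply: ln_gt0; lra.
have l2m : ln 2 <= ln (m%:R) :> R.
  by rewrite ler_ln ?posrE // ?ler_nat //; lra.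
have g0 := gg_gt0; have g1 := gg_lt1.
have lg0 : ln (gg p) < 0 by apply: ln_lt0; rewrite g0 g1.
have c0 : 0 <= cc p by rewrite /cc; apply: divr_ge0; lra.
have hr : ((Num.truncn (cc p * ln m%:R))%:R <= cc p * ln (m%:R)).
  by rewrite truncn_le; apply: mulr_ge0 => //; exact: ltW.
have h1 : 1 <= ln (m%:R) / ln 2 :> R by rewrite ler_pdivlMr // mul1r.
rewrite natrM natrM /rr -addn1 natrD.
move: hr h1; set t := (Num.truncn _)%:R; set L := ln _; set c := cc p => hr h1.
rewrite (_ : (2 * (c + 1 / ln 2) * (m%:R * L)) = m%:R * (2%:R * (c * L + L / ln 2))); last first.
  by field; apply: lt0r_neq0.
apply: ler_wpM2l; first exact: ltW.
rewrite -[(Num.truncn _).+1]addn1 natrD -/t.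
nra.
Qed.
End Real.

Unset Implicit Arguments. Set Strict Implicit.
Local Open Scope ring_scope.

Lemma weight_ge0 (R : realType) (p : R) K (f : {ffun 'I_K -> bool}) :
  0 <= p -> p <= 1 -> 0 <= weight p f.
Proof.
move=> h0 h1; rewrite /weight; apply: prodr_ge0 => i _; case: (f i) => //; lra.
Qed.

Lemma bad_bound (R : realType) (lam : R) (r X : nat) :
  1 <= lam -> ((r <= X)%N)%:R <= lam ^+ X / lam ^+ r.
Proof.
move=> hl; have l0 : 0 < lam by apply: lt_le_trans hl.
case: (leqP r X) => h /=.
  by rewrite ler_pdivlMr ?exprn_gt0 // mul1r ler_weXn2l.
by apply: divr_ge0; apply: exprn_ge0; apply: ltW.
Qed.

Theorem lemma1 (R : realType) (p : R) :
  0 <= p -> p < 1 / 2 ->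
  exists (A : algorithm) (C : R),
    forall eps : R, 0 < eps ->
    exists M : nat,
      forall (n : nat) (E : {set {set 'I_n}}),
        simple_graph E -> (2 <= #|E|)%N -> (M <= #|E|)%N ->
        forall Rz : {set {set 'I_n}}, Rz \subset E -> connected_sp Rz ->
        exists K : nat,
          [/\ K%:R <= C * (#|E|%:R * ln (#|E|%:R)),
              (forall flips : nat -> bool,
                  exec (A n E) Rz flips K [::] != None)
            & 1 - eps <=
              \sum_(f : {ffun 'I_K -> bool})
                 weight p f * (successb E Rz (exec (A n E) Rz (ext_flips f) K [::]))%:R].
Proof.
move=> p0 p1.
exists (alg p), (2 * (cc p + 1 / ln 2)) => eps heps.
exists (Num.truncn (eps^-1)).+1 => n E _ hE2 hM Rz hsub hc.
exists (KK p E); split.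
- by rewrite /KK /BB; apply: K_bound.
- by move=> fl; rewrite exec_run.
set m := #|E|; set B := BB p E; set r := rr p m.
have B0 : (0 < B)%N by rewrite /B /BB muln_gt0.
have pl1 : p <= 1 by lra.
set s := fun f : {ffun 'I_(KK p E) -> bool} =>
  (successb E Rz (exec (alg p E) Rz (ext_flips f) (KK p E) [::]))%:R : R.
set bad := fun (f : {ffun 'I_(KK p E) -> bool}) (a : 'I_m) =>
  ((r <= \sum_(i < B) (ext_flips f (a * B + i)%N : nat))%N)%:R : R.
have key : forall f, 1 - s f <= \sum_(a < m) bad f a.
  move=> f; rewrite /s; case: (boolP (successb _ _ _)) => hs.
    by rewrite subrr; apply: sumr_ge0 => a _; rewrite /bad; case: leqP.
  rewrite subr0.
  case: (pselect (exists2 a, (a < m)%N &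
     (r <= \sum_(i < B) (ext_flips f (a * B + i)%N : nat))%N)) => [[a am ha]|hn]; last first.
    exfalso; apply: (negP hs); apply/asboolP; apply: good_success => // a am.
    rewrite ltnNge; apply/negP => h; apply: hn; by exists a.
  rewrite (bigD1 (Ordinal am)) //= /bad /= ha lerDl.
  by apply: sumr_ge0 => b _; case: leqP.
change (1 - eps <= \sum_(f : {ffun 'I_(KK p E) -> bool}) weight p f * s f).
have hw := weight_sum p (KK p E).
have e1 : \sum_(f : {ffun 'I_(KK p E) -> bool}) weight p f * s f =
    1 - \sum_(f : {ffun 'I_(KK p E) -> bool}) weight p f * (1 - s f).
  rewrite -{1}hw -sumrB; apply: eq_bigr => f _; ring.
have bnd : \sum_(f : {ffun 'I_(KK p E) -> bool}) weight p f * (1 - s f) <= m%:R * gg p ^+ r.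
  apply: (@le_trans _ _ (\sum_(f : {ffun 'I_(KK p E) -> bool}) weight p f * \sum_(a < m) bad f a)).
    apply: ler_sum => f _; apply: ler_wpM2l; [exact: weight_ge0 | exact: key].
  rewrite (eq_bigr (fun f => \sum_(a < m) weight p f * bad f a)); last by move=> f _; rewrite mulr_sumr.
  rewrite exchange_big /=.
  apply: (@le_trans _ _ (\sum_(a < m) gg p ^+ r)); last by rewrite sumr_const card_ord mulr_natl.
  apply: ler_sum => a _.
  apply: (@le_trans _ _ (\sum_(f : {ffun 'I_(KK p E) -> bool}) weight p f *
     (lam p ^+ (\sum_(i < B) (ext_flips f (a * B + i)%N : nat)) / lam p ^+ r))).
    apply: ler_sum => f _; apply: ler_wpM2l; first exact: weight_ge0.
    by apply: bad_bound; apply: lam_ge1.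
  rewrite (eq_bigr (fun f : {ffun 'I_(KK p E) -> bool} => weight p f *
     lam p ^+ (\sum_(i < B) (ext_flips f (a * B + i)%N : nat)) / lam p ^+ r)); last first.
    by move=> f _; rewrite mulrA.
  rewrite -mulr_suml.
  have ch := chernoff p (lam p) B0 (ltn_ord a).
  rewrite [X in X / _](_ : _ = (p * lam p + (1 - p)) ^+ B); last exact: ch.
  by rewrite /B /BB -/r exprM -expr_div_n.
rewrite e1 lerD2l lerN2.
apply: (le_trans bnd).
have m2 : (2 <= m)%N := hE2.
have mgt0 : 0 < m%:R :> R by rewrite ltr0n; apply: leq_trans m2.
apply: (@le_trans _ _ (m%:R * (m%:R ^+ 2)^-1)).
  by apply: ler_wpM2l; [exact: ltW | exact: gg_pow_bound].
have -> : m%:R * (m%:R ^+ 2)^-1 = (m%:R)^-1 :> R.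
  by field; apply: lt0r_neq0.
have hinv : eps^-1 < m%:R.
  apply: (lt_le_trans (truncnS_gt _)); by rewrite ler_nat.
have ee : eps * eps^-1 = 1 by rewrite mulfV //; apply: lt0r_neq0.
rewrite -div1r ler_pdivrMr // -{1}ee.
by apply: ler_wpM2l; [exact: ltW | exact: ltW].
Qed.
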